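(* The transformation $\mathcal{A}_1$ is not an Upsilon transformation: there is no measure $\tau$ on $(0,\infty)$ such that $\mathcal{A}_1(\rho)(B)=\int_0^\infty\rho(u^{-1}B)\tau(\mathrm{d}u)$ for all $\rho\in\mathfrak{M}_L^1(\mathbb{R}^d)$ and all Borel sets $B\subset\mathbb{R}^d$.
   Context: A Lévy measure on $\mathbb{R}^d$ is a measure $\nu$ with $\nu(\{0\})=0$ and $\int(1\wedge|x|^2)\nu(\mathrm{d}x)<\infty$; $\mathfrak{M}_L^1(\mathbb{R}^d)$ is the class of those with $\int(1\wedge|x|)\nu(\mathrm{d}x)<\infty$. $a_1(r;s)=2\pi^{-1}(s-r^2)^{-1/2}$ for $0<r<s^{1/2}$, $0$ otherwise; $\mathcal{A}_1(\nu)(B)=\int_{\mathbb{R}^d\setminus\{0\}}\nu(\mathrm{d}x)\int_0^\infty a_1(r;|x|)1_B(rx/|x|)\mathrm{d}r$. Here $u^{-1}B=\{u^{-1}x:x\in B\}$. *)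

(* Defs.v *)
From HB Require Import structures.
From mathcomp Require Import all_boot all_order all_algebra.
From mathcomp Require Import all_classical all_reals all_analysis.
Set Implicit Arguments. Unset Strict Implicit. Unset Printing Implicit Defensive.
Import Order.TTheory GRing.Theory Num.Theory.
Import numFieldNormedType.Exports.
Local Open Scope classical_set_scope.
Local Open Scope ring_scope.

Definition Rd (R : realType) (d : nat) :=
  g_sigma_algebraType (@open 'rV[R]_d).

Definition enorm (R : realType) (d : nat) (x : 'rV[R]_d) : R :=
  Num.sqrt (\sum_(i < d) x ord0 i ^+ 2).

Definition a1 (R : realType) (r s : R) : R :=
  if (0 < r) && (r < Num.sqrt s) then 2 / pi * (Num.sqrt (s - r ^+ 2))^-1
  else 0.

Definition levy_measure (R : realType) (d : nat)
    (nu : {measure set (Rd R d) -> \bar R}) : Prop :=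
  nu [set (0%R : 'rV[R]_d)] = 0%E /\
  (\int[nu]_x (Order.min 1 (enorm (x : 'rV[R]_d) ^+ 2))%:E < +oo)%E.

Definition ML1 (R : realType) (d : nat)
    (nu : {measure set (Rd R d) -> \bar R}) : Prop :=
  levy_measure nu /\
  (\int[nu]_x (Order.min 1 (enorm (x : 'rV[R]_d)))%:E < +oo)%E.

Definition A1 (R : realType) (d : nat)
    (nu : {measure set (Rd R d) -> \bar R}) (B : set (Rd R d)) : \bar R :=
  (\int[nu]_(x in ~` [set (0%R : 'rV[R]_d)])
     \int[lebesgue_measure]_(r in `]0%R, +oo[)
        (a1 r (enorm (x : 'rV[R]_d)) *
         \1_B ((r / enorm (x : 'rV[R]_d)) *: (x : 'rV[R]_d)))%:E)%E.

Definition scale_set (R : realType) (d : nat) (u : R) (B : set (Rd R d))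
  : set (Rd R d) :=
  [set (u^-1 *: (x : 'rV[R]_d)) | x in B].

(* Main.v *)
Require Import Defs.
From HB Require Import structures.
From mathcomp Require Import all_boot all_order all_algebra.
From mathcomp Require Import all_classical all_reals all_analysis.
From mathcomp Require Import ring lra.
Import Order.TTheory GRing.Theory Num.Theory.
Import numFieldNormedType.Exports.
Local Open Scope classical_set_scope.
Local Open Scope ring_scope.

Import HBNNSimple.
Section gen.
Local Open Scope ereal_scope.
Context (dd : measure_display) (T : measurableType dd) (R : realType).

Lemma int_mono (mu : {measure set T -> \bar R}) (D : set T) (f g : T -> \bar R) :
  (forall x, D x -> 0 <= f x) -> (forall x, D x -> f x <= g x) ->
  \int[mu]_(x in D) f x <= \int[mu]_(x in D) g x.
Proof.
move=> f0 fg.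
have g0 : forall x, D x -> 0 <= g x by move=> x Dx; exact: le_trans (f0 _ Dx) (fg _ Dx).
rewrite !ge0_integralE//=; apply: ereal_sup_le => _ [h hf <-]; exists h => //= x.
apply: le_trans (hf x) _; rewrite /patch; case: ifP => // /set_mem; exact: fg.
Qed.

Lemma dirac_ub (a : T) (D : set T) (f : T -> \bar R) :
  (forall x, D x -> 0 <= f x) -> D a ->
  \int[\d_a]_(x in D) f x <= f a.
Proof.
move=> f0 Da; rewrite ge0_integralE//=; apply: ge_ereal_sup => _ [h hf <-].
have := integral_nnsfun (\d_a) measurableT h; rewrite patch_setT => <-.
rewrite integral_dirac; last first.
  apply/measurable_realfun.measurable_EFinP. exact: measurable_funP.
  exact: measurableT.
rewrite diracT mul1e; apply: le_trans (hf a) _.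
by rewrite patchT// inE.
Qed.

Lemma dirac_lb (a : T) (D : set T) (f : T -> \bar R) :
  measurable D -> measurable [set a] ->
  (forall x, D x -> 0 <= f x) -> D a ->
  f a <= \int[\d_a]_(x in D) f x.
Proof.
move=> mD ma f0 Da.
apply: le_trans (@int_mono (\d_a) D (fun x => f a * (\1_[set a] x)%:E) f _ _).
- rewrite integral_dirac//; last first.
    apply: measurable_funeM; apply/measurable_realfun.measurable_EFinP.
    exact: measurable_realfun.measurable_indic.
  by rewrite diracE mem_set// mul1e indicE mem_set// mule1.
- move=> x _; rewrite indicE; case: (x \in _); rewrite ?mule1 ?mule0//.
  exact: f0.
- move=> x Dx; rewrite indicE; case: (boolP (x \in _)) => [/set_mem -> |_].
    by rewrite mule1.
  by rewrite mule0; exact: f0.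
Qed.
End gen.

Section spec.
Variables (R : realType) (n : nat).
Local Notation V := 'rV[R]_n.+1.
Definition e1 : V := delta_mx ord0 ord0.

Lemma e1_00 (k : R) : (k *: e1) ord0 ord0 = k.
Proof. by rewrite !mxE eqxx mulr1. Qed.

Lemma enorm_e1 (k : R) : enorm (k *: e1) = `|k|.
Proof.
rewrite /enorm (bigD1 ord0)//= big1 ?addr0 ?e1_00 ?sqrtr_sqr//.
move=> i /negbTE i0; by rewrite !mxE i0 andbF mulr0 expr2 mulr0.
Qed.

Definition Bc (c : R) : set (Rd R n.+1) := [set y : V | c < y ord0 ord0].

Lemma Bc_open c : open (Bc c : set V).
Proof.
rewrite /Bc (_ : [set y : V | c < y ord0 ord0] = (fun y : V => y ord0 ord0) @^-1` [set x | c < x]) //.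
apply: open_comp; last exact: open_gt.
by move=> x _; exact: coord_continuous.
Qed.

Lemma meas_open (A : set (Rd R n.+1)) : open (A : set V) -> measurable A.
Proof. by move=> oA; apply: sub_sigma_algebra. Qed.

Lemma meas_set1 (x : Rd R n.+1) : measurable [set x].
Proof.
rewrite -[X in measurable X]setCK; apply: measurableC; apply: meas_open.
apply: closed_openC; apply: accessible_closed_set1; apply: hausdorff_accessible.
exact: norm_hausdorff.
Qed.

Lemma scale_setE (u : R) (B : set (Rd R n.+1)) (x : Rd R n.+1) : u != 0 ->
  scale_set u B x <-> B (u *: x).
Proof.
move=> u0; split.
  by move=> [y By <-]; rewrite scalerA divff// scale1r.
by move=> Bux; exists (u *: x) => //; rewrite scalerA mulVf// scale1r.
Qed.

Lemma a1_ge0 (r s : R) : 0 <= a1 r s.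
Proof.
rewrite /a1; case: ifP => // _; apply: mulr_ge0; last by rewrite invr_ge0 sqrtr_ge0.
by apply: divr_ge0 => //; exact: pi_ge0.
Qed.

End spec.

Lemma ML1_dirac (R : realType) (n : nat) (x : Rd R n.+1) : x != 0 ->
  ML1 (\d_x : {measure set (Rd R n.+1) -> \bar R}).
Proof.
move=> x0; split; first split.
- by rewrite /= (@diracE _ _ R) memNset//= => /eqP; rewrite (negbTE x0).
- apply: le_lt_trans; first apply: dirac_ub => //.
    by move=> *; rewrite lee_fin le_min ler01 sqr_ge0.
  exact: ltry.
- apply: le_lt_trans; first apply: dirac_ub => //.
    by move=> *; rewrite lee_fin le_min ler01 sqrtr_ge0.
  exact: ltry.
Qed.

Definition Finner (R : realType) (n : nat) (B : set (Rd R n)) (x : Rd R n) : \bar R :=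
  (\int[lebesgue_measure]_(r in `]0%R, +oo[)
        (a1 r (enorm (x : 'rV[R]_n)) *
         \1_B ((r / enorm (x : 'rV[R]_n)) *: (x : 'rV[R]_n)))%:E)%E.
Arguments Finner {R n}.

Lemma Finner_ge0 (R : realType) (n : nat) (B : set (Rd R n)) x : (0 <= Finner B x)%E.
Proof.
apply: integral_ge0 => r _; rewrite lee_fin mulr_ge0 ?a1_ge0//.

Qed.

Lemma A1_dirac (R : realType) (n : nat) (B : set (Rd R n.+1)) (x : Rd R n.+1) :
  x != 0 -> A1 (\d_x : {measure set (Rd R n.+1) -> \bar R}) B = Finner B x.
Proof.
move=> x0; apply/eqP; rewrite eq_le; apply/andP; split.
  apply: dirac_ub; first by move=> *; exact: Finner_ge0.
  by move=> /= /eqP; rewrite (negbTE x0).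
apply: dirac_lb.
- by apply: measurableC; exact: meas_set1.
- exact: meas_set1.
- by move=> *; exact: Finner_ge0.
- by move=> /= /eqP; rewrite (negbTE x0).
Qed.

Lemma Finner_zero (R : realType) (n : nat) :
  Finner (Bc R n 2) (4 *: e1 R n) = 0%E.
Proof.
apply: integral0_eq => r /= r0.
rewrite enorm_e1 scalerA indicE /Bc ger0_norm// mulfVK ?pnatr_eq0//.
case: (boolP (_ \in _)) => [Hin | _]; last by rewrite mulr0.
move/set_mem: Hin; rewrite /= e1_00 => h.
rewrite /a1; case: ifP; last by rewrite mul0r.
move=> /andP[_ r2]; exfalso.
move: r2; rewrite (_ : 4 = 2 ^+ 2); last by rewrite -natrX.
by rewrite sqrtr_sqr ger0_norm// => /(lt_trans h); rewrite ltxx.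
Qed.

Lemma Finner_pos (R : realType) (n : nat) :
  (0 < Finner (Bc R n 2^-1) (1 *: e1 R n))%E.
Proof.
rewrite /Finner enorm_e1 normr1.
pose I : set R := `]2^-1, 1[%classic.
have mI : measurable I by exact: measurable_itv.
have mD : measurable (`]0%R, +oo[%classic : set R) by exact: measurable_itv.
have H : (\int[lebesgue_measure]_(r in `]0%R, +oo[) ((2 / pi)%:E * (\1_I r)%:E)
   = (2 / pi)%:E * (lebesgue_measure (I `&` `]0%R, +oo[)))%E.
  rewrite ge0_integralZl_EFin//.
  - by rewrite integral_indic.
  - by apply/measurable_realfun.measurable_EFinP; exact: measurable_realfun.measurable_indic.
  - by apply: divr_ge0 => //; exact: pi_ge0.
apply: (@lt_le_trans _ _ (\int[lebesgue_measure]_(r in `]0%R, +oo[) ((2 / pi)%:E * (\1_I r)%:E))%E).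
- rewrite H setIidl; last first.
    move=> x; rewrite /I /= !in_itv /= andbT => /andP[h _]; apply: lt_trans h; by rewrite invr_gt0 ltr0n.
  have h2 : (2^-1 : R) < 1 by rewrite invf_lt1 ?ltr1n.
  rewrite lebesgue_measure_itv /= lte_fin h2 -EFinD -EFinM lte_fin.
  apply: mulr_gt0; first by apply: divr_gt0 => //; exact: pi_gt0.
  by rewrite subr_gt0.
apply: int_mono.
- move=> x _; rewrite -EFinM lee_fin; apply: mulr_ge0; last by rewrite indicE.
  by apply: divr_ge0 => //; exact: pi_ge0.
- move=> r; rewrite /= in_itv /= andbT => r0.
  rewrite -EFinM lee_fin !indicE.
  case: (boolP (r \in I)) => [rI|_]; last first.
    by rewrite mulr0 mulr_ge0 ?a1_ge0.
  move: (rI); rewrite /I inE /= in_itv /= => /andP[hr1 hr2].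
  have -> : ((r / 1) *: (1 *: e1 R n) \in Bc R n 2^-1) = true.
    by apply/mem_set; rewrite /Bc /= scalerA e1_00 divr1 mulr1.
  rewrite !mulr1 /a1 r0 sqrtr1 hr2 /=.
  have hs : 0 < Num.sqrt (1 - r ^+ 2).
    by rewrite sqrtr_gt0 subr_gt0; nra.
  rewrite ler_pMr; last by apply: divr_gt0 => //; exact: pi_gt0.
  rewrite invf_ge1 // -[X in _ <= X]sqrtr1 ler_sqrt; nra.
Qed.

Theorem theorem3p10 (R : realType) (d : nat) (hd : (0 < d)%N) :
  ~ exists tau : {measure set R -> \bar R},
      forall rho : {measure set (Rd R d) -> \bar R}, ML1 rho ->
      forall B : set (Rd R d), measurable B ->
        A1 rho B = (\int[tau]_(u in `]0%R, +oo[) rho (scale_set u B))%E.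
Proof.
move=> [tau Htau]; case: d hd tau Htau => [//|n] _ tau Htau.
pose x1 : Rd R n.+1 := 1 *: e1 R n.
pose x2 : Rd R n.+1 := 4 *: e1 R n.
have x1n0 : x1 != 0.
  apply/eqP => h; have := e1_00 R n 1; rewrite -/x1 h mxE => /eqP.
  by rewrite eq_sym oner_eq0.
have x2n0 : x2 != 0.
  apply/eqP => h; have := e1_00 R n 4; rewrite -/x2 h mxE => /eqP.
  by rewrite eq_sym pnatr_eq0.
have H1 := Htau _ (@ML1_dirac R n x1 x1n0) _ (@meas_open R n _ (Bc_open R n 2^-1)).
have H2 := Htau _ (@ML1_dirac R n x2 x2n0) _ (@meas_open R n _ (Bc_open R n 2)).
rewrite A1_dirac // in H1; rewrite A1_dirac // Finner_zero in H2.
have E : (\int[tau]_(u in `]0%R, +oo[) (\d_x1 : {measure set (Rd R n.+1) -> \bar R}) (scale_set u (Bc R n 2^-1)))%E =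
         (\int[tau]_(u in `]0%R, +oo[) (\d_x2 : {measure set (Rd R n.+1) -> \bar R}) (scale_set u (Bc R n 2)))%E.
  apply: eq_integral => u; rewrite inE /= in_itv /= andbT => u0.
  rewrite /= !(@diracE _ _ R); congr ((_ : bool)%:R%:E).
  have u0' : u != 0 by rewrite gt_eqF.
  apply/idP/idP => /set_mem/(@scale_setE R n u _ _ u0') h; apply/mem_set;
    apply/(@scale_setE R n u _ _ u0'); move: h; rewrite /Bc /x1 /x2 /= !scalerA !e1_00; lra.
have P := Finner_pos R n; rewrite -/x1 H1 E -H2 ltxx in P; by [].
Qed.
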